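(* Let $\mathcal{A}$ be a strong $T_0$-family and $\varepsilon>0$. Then $\mathcal{X}_\mathcal{A}$ does not admit any uncountable equilateral set, and the unit sphere of $\mathcal{X}_\mathcal{A}$ does not admit any uncountable $(1+\varepsilon)$-separated set.
   Context: A set $\mathcal{Y}$ is equilateral if there is $\delta>0$ with $\|y-y'\|=\delta$ for distinct $y,y'\in\mathcal{Y}$, and $\gamma$-separated if $\|y-y'\|\ge\gamma$ for distinct $y,y'$. $c_{00}(\omega_1)$ is the set of finitely supported $x\in\mathbb{R}^{\omega_1}$; $\|x\|_\mathcal{A}=\sup_{A\in\mathcal{A}}\sqrt{\sum_{\alpha\in A}x(\alpha)^2}$ and $\mathcal{X}_\mathcal{A}$ is the closure of $c_{00}(\omega_1)$ in $\{x\in\mathbb{R}^{\omega_1}:\|x\|_\mathcal{A}<\infty\}$. For disjoint $A,B$, $A\otimes B=\{\{\alpha,\beta\}:\alpha\in A,\beta\in B\}$. A function $c=(c_0,c_1):[\omega_1]^2\to I\times J$ ($0,1\in I$, $J\ne\emptyset$) is a $T$-coloring if for every uncountable pairwise disjoint family $\{\{a_\xi(0),a_\xi(1)\}:\xi<\omega_1\}$ of pairs and all $(i_0,j_0),(i_1,j_1)\in I\times J$ there are $\xi<\eta$ with $c(\{a_\xi(0),a_\eta(0)\})=(i_0,j_0)$, $c(\{a_\xi(1),a_\eta(1)\})=(i_1,j_1)$; it is a strong $T$-coloring if moreover for every uncountable pairwise disjoint family $\{A_\xi:\xi<\omega_1\}$ of finite subsets of $\omega_1$ there are $\xi<\eta$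 with $c_0[A_\xi\otimes A_\eta]=\{0\}$ and $\xi<\eta$ with $c_0[A_\xi\otimes A_\eta]=\{1\}$. A strong $T_0$-family is $\mathcal{A}_c=\{a\subseteq\omega_1\text{ finite}:c_0[[a]^2]\subseteq\{0\}\}$ for a strong $T$-coloring $c$. *)

(* Defs.v *)
From Stdlib Require Import Reals List.
From Coquelicot Require Import Coquelicot.
Open Scope R_scope.

Definition countable {T : Type} (P : T -> Prop) : Prop :=
  exists f : T -> nat, forall x y, P x -> P y -> f x = f y -> x = y.
Definition uncountable {T : Type} (P : T -> Prop) : Prop := ~ countable P.

(** (W, lt) is (an isomorphic copy of) the ordinal omega_1: a strict
    well-order which is uncountable but all of whose proper initial
    segments are countable. *)
Definition is_omega1 (W : Type) (lt : W -> W -> Prop) : Prop :=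
  (forall a, ~ lt a a) /\
  (forall a b c, lt a b -> lt b c -> lt a c) /\
  (forall a b, lt a b \/ a = b \/ lt b a) /\
  well_founded lt /\
  uncountable (fun _ : W => True) /\
  (forall b, countable (fun a => lt a b)).

(** Colorings of [omega_1]^2 are represented by symmetric functions
    c : W -> W -> I * J; only values at distinct arguments are used. *)
Definition symmetric_coloring {W I J : Type} (c : W -> W -> I * J) : Prop :=
  forall a b, c a b = c b a.

Definition T_coloring {W I J : Type} (lt : W -> W -> Prop)
    (c : W -> W -> I * J) : Prop :=
  forall (a0 a1 : W -> W),
    (forall xi, a0 xi <> a1 xi) ->
    (forall xi eta, xi <> eta ->
       forall g, (g = a0 xi \/ g = a1 xi) -> g <> a0 eta /\ g <> a1 eta) ->
    forall (p0 p1 : I * J),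
      exists xi eta, lt xi eta /\ c (a0 xi) (a0 eta) = p0 /\
                     c (a1 xi) (a1 eta) = p1.

Definition strong_T_coloring {W I J : Type} (lt : W -> W -> Prop)
    (zero one : I) (c : W -> W -> I * J) : Prop :=
  T_coloring lt c /\
  forall A : W -> list W,
    (forall xi, A xi <> nil) ->
    (forall xi eta, xi <> eta -> forall g, In g (A xi) -> ~ In g (A eta)) ->
    (exists xi eta, lt xi eta /\
       forall a b, In a (A xi) -> In b (A eta) -> fst (c a b) = zero) /\
    (exists xi eta, lt xi eta /\
       forall a b, In a (A xi) -> In b (A eta) -> fst (c a b) = one).

(** The family A_c of finite 0-homogeneous sets (finite sets = duplicate-free lists). *)
Definition T0_family {W I J : Type} (zero : I) (c : W -> W -> I * J)
    (l : list W) : Prop :=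
  NoDup l /\
  forall a b, In a l -> In b l -> a <> b -> fst (c a b) = zero.

Definition sumsq {W : Type} (x : W -> R) (l : list W) : R :=
  fold_right Rplus 0 (map (fun a => (x a) ^ 2) l).

Definition normA {W : Type} (A : list W -> Prop) (x : W -> R) : Rbar :=
  Lub_Rbar (fun r => exists l, A l /\ r = sqrt (sumsq x l)).

Definition finsupp {W : Type} (x : W -> R) : Prop :=
  exists l : list W, forall a, x a <> 0 -> In a l.

Definition vsub {W : Type} (x y : W -> R) : W -> R := fun a => x a - y a.

(** X_A: closure of c_00 inside { x | ||x||_A < oo }. *)
Definition XA {W : Type} (A : list W -> Prop) (x : W -> R) : Prop :=
  Rbar_lt (normA A x) p_infty /\
  forall eps, 0 < eps ->
    exists z, finsupp z /\ Rbar_lt (normA A (vsub x z)) (Finite eps).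

Definition equilateral {W : Type} (A : list W -> Prop) (Y : (W -> R) -> Prop) : Prop :=
  exists delta, 0 < delta /\
    forall y y', Y y -> Y y' -> y <> y' -> normA A (vsub y y') = Finite delta.

Definition separated {W : Type} (A : list W -> Prop) (gamma : R)
    (Y : (W -> R) -> Prop) : Prop :=
  forall y y', Y y -> Y y' -> y <> y' -> Rbar_le (Finite gamma) (normA A (vsub y y')).

(* Main.v *)
Require Import Defs.
From Stdlib Require Import Reals List.
From Coquelicot Require Import Coquelicot.
From Stdlib Require Import ZArith Lra Lia ClassicalEpsilon Classical FunctionalExtensionality PropExtensionality.
From Stdlib Require Cantor.
Open Scope R_scope.

Lemma countable_mono {T} (P Q : T -> Prop) :
  (forall x, P x -> Q x) -> countable Q -> countable P.
Proof. intros H [f Hf]. exists f. intros x y Hx Hy. apply Hf; auto. Qed.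

Lemma uncountable_mono {T} (P Q : T -> Prop) :
  (forall x, P x -> Q x) -> uncountable P -> uncountable Q.
Proof. intros H HP HQ. apply HP. eapply countable_mono; eauto. Qed.

Lemma countable_union {A B} (S : A -> Prop) (Q : A -> B -> Prop) :
  countable S -> (forall s, S s -> countable (Q s)) ->
  countable (fun y => exists s, S s /\ Q s y).
Proof.
  intros [f Hf] HQ.
  assert (G : forall s, {g : B -> nat | S s -> forall x y, Q s x -> Q s y -> g x = g y -> x = y}).
  { intro s. apply constructive_indefinite_description.
    destruct (classic (S s)) as [Hs|Hs].
    - destruct (HQ s Hs) as [g Hg]. exists g; auto.
    - exists (fun _ => 0%nat). intro; contradiction. }
  exists (fun y => match excluded_middle_informative (exists s, S s /\ Q s y) with
    | left H => let s := proj1_sig (constructive_indefinite_description _ H) in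
                Cantor.to_nat (f s, proj1_sig (G s) y)
    | right _ => 0%nat end).
  intros x y Hx Hy.
  destruct (excluded_middle_informative (exists s, S s /\ Q s x)) as [H1|H1]; [|contradiction].
  destruct (excluded_middle_informative (exists s, S s /\ Q s y)) as [H2|H2]; [|contradiction].
  destruct (constructive_indefinite_description _ H1) as [s1 [Hs1 Hq1]].
  destruct (constructive_indefinite_description _ H2) as [s2 [Hs2 Hq2]].
  intro E.
  change (Cantor.to_nat (f s1, proj1_sig (G s1) x) = Cantor.to_nat (f s2, proj1_sig (G s2) y)) in E.
  apply (f_equal Cantor.of_nat) in E. rewrite !Cantor.cancel_of_to in E.
  injection E as E1 E2.
  assert (s1 = s2) by (apply Hf; auto). subst s2.
  destruct (G s1) as [g Hg]. simpl in E2. apply (Hg Hs1); auto.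
Qed.

Lemma countable_nat : countable (fun _ : nat => True).
Proof. exists (fun n => n). auto. Qed.

Lemma countable_Z : countable (fun _ : Z => True).
Proof.
  exists (fun z => Z.to_nat (if Z_le_dec 0 z then 2*z else -2*z-1)%Z).
  intros x y _ _. destruct (Z_le_dec 0 x); destruct (Z_le_dec 0 y); lia.
Qed.

Lemma countable_single {T} (x : T) : countable (fun y => y = x).
Proof. exists (fun _ => 0%nat). intros a b -> -> _. auto. Qed.

Lemma countable_empty {T} (P : T -> Prop) : (forall x, ~ P x) -> countable P.
Proof. intros H. exists (fun _ => 0%nat). intros a b Ha. exfalso; eapply H; eauto. Qed.

Lemma countable_or {T} (P Q : T -> Prop) :
  countable P -> countable Q -> countable (fun x => P x \/ Q x).
Proof.
  intros HP HQ.
  eapply countable_mono; [| apply (countable_union (fun _ : bool => True)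
     (fun b => if b then P else Q))].
  - intros x [H|H]; [exists true|exists false]; auto.
  - exists (fun b : bool => if b then 0%nat else 1%nat). intros [] []; auto; discriminate.
  - intros []; auto.
Qed.

Lemma countable_In {T} (l : list T) : countable (fun a => In a l).
Proof.
  induction l as [|x l IH].
  - apply countable_empty. intros x H; exact H.
  - simpl. eapply countable_mono; [|apply countable_or; [apply (countable_single x)|exact IH]].
    intros a [->|H]; auto.
Qed.

Lemma countable_image {A B} (S : A -> Prop) (g : A -> B) :
  countable S -> countable (fun y => exists a, S a /\ y = g a).
Proof.
  intros HS. apply countable_union; auto. intros s _. apply countable_single.
Qed.

Lemma pigeon {T K} (HK : countable (fun _ : K => True)) (P : T -> Prop) (h : T -> K) :
  uncountable P -> exists k, uncountable (fun y => P y /\ h y = k).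
Proof.
  intros HP. apply NNPP. intro Hn. apply HP.
  eapply countable_mono; [|apply (countable_union (fun _ : K => True)
     (fun k y => P y /\ h y = k)); auto].
  - intros x Hx. exists (h x). auto.
  - intros k _. apply NNPP. intro Hc. apply Hn. exists k. exact Hc.
Qed.

Lemma two_elems {T} (P : T -> Prop) : uncountable P -> exists x y, P x /\ P y /\ x <> y.
Proof.
  intros HP. apply NNPP. intro Hn. apply HP. exists (fun _ => 0%nat).
  intros x y Hx Hy _. apply NNPP. intro Hxy. apply Hn. exists x, y. auto.
Qed.

Section Ord.
Variable W : Type.
Variable lt : W -> W -> Prop.
Hypothesis Hw1 : is_omega1 W lt.

Lemma omega1_rec {T} (P : T -> Prop) (Comp : T -> T -> Prop) :
  (forall C : T -> Prop, countable C -> exists y, P y /\ forall x, C x -> Comp x y) ->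
  exists g : W -> T, (forall xi, P (g xi)) /\ (forall z xi, lt z xi -> Comp (g z) (g xi)).
Proof.
  intros H.
  destruct Hw1 as (Hirr & Htr & Htri & Hwf & Hunc & Hseg).
  assert (inhT : inhabited T).
  { destruct (H (fun _ => False)) as [y _]. apply countable_empty; auto. exact (inhabits y). }
  set (F := fun (xi : W) (rec : forall z, lt z xi -> T) =>
        epsilon inhT (fun y => P y /\ forall z (h : lt z xi), Comp (rec z h) y)).
  exists (Fix Hwf (fun _ => T) F).
  assert (Heq : forall xi, Fix Hwf (fun _ => T) F xi = F xi (fun z _ => Fix Hwf (fun _ => T) F z)).
  { intro xi. apply (Fix_eq Hwf (fun _ => T) F). intros x f g Hfg. unfold F. f_equal.
    apply functional_extensionality. intro y. apply propositional_extensionality.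
    split; intros [Hy Hc]; split; auto; intros z h; [rewrite <- Hfg|rewrite Hfg]; auto. }
  assert (Hspec : forall xi, P (Fix Hwf (fun _ => T) F xi) /\
            forall z, lt z xi -> Comp (Fix Hwf (fun _ => T) F z) (Fix Hwf (fun _ => T) F xi)).
  { intro xi. rewrite Heq. unfold F at 1.
    pose proof (epsilon_spec inhT (fun y => P y /\ forall z (h : lt z xi),
         Comp ((fun z (_ : lt z xi) => Fix Hwf (fun _ => T) F z) z h) y)) as Hs.
    destruct Hs as [Hp Hc].
    - destruct (H (fun x => exists z, lt z xi /\ x = Fix Hwf (fun _ => T) F z)) as [y [Hy Hcy]].
      + apply countable_image. apply Hseg.
      + exists y. split; auto. intros z h. apply Hcy. eauto.
    - split; auto. }
  split; intros; apply Hspec; auto.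
Qed.

Lemma omega1_inj {T} (P : T -> Prop) : uncountable P ->
  exists g : W -> T, (forall xi, P (g xi)) /\ (forall a b, g a = g b -> a = b).
Proof.
  intros HP.
  destruct (omega1_rec P (fun x y => x <> y)) as [g [Hg1 Hg2]].
  - intros C HC. apply NNPP. intro Hn. apply HP. eapply countable_mono; [|exact HC].
    intros x Hx. apply NNPP. intro Hcx. apply Hn. exists x. split; auto.
    intros x' Hx' ->. auto.
  - exists g. split; auto. intros a b E.
    destruct Hw1 as (_ & _ & Htri & _).
    destruct (Htri a b) as [h|[h|h]]; auto.
    + exfalso; apply (Hg2 _ _ h); auto.
    + exfalso; apply (Hg2 _ _ h); auto.
Qed.

Lemma image_uncountable {T} (g : W -> T) : (forall a b, g a = g b -> a = b) ->
  uncountable (fun y => exists xi, y = g xi).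
Proof.
  intros Hinj [f Hf]. destruct Hw1 as (_ & _ & _ & _ & Hunc & _). apply Hunc.
  exists (fun a => f (g a)). intros x y _ _ E. apply Hinj. apply Hf; eauto.
Qed.

End Ord.
Section Delta.
Variable W : Type.
Variable lt : W -> W -> Prop.
Hypothesis Hw1 : is_omega1 W lt.

Definition Wdec (a b : W) : {a = b} + {a <> b} := excluded_middle_informative (a = b).

Lemma delta_B {T} (F : T -> list W) (P : T -> Prop) : uncountable P ->
  (forall a, countable (fun y => P y /\ In a (F y))) ->
  exists P', (forall y, P' y -> P y) /\ uncountable P' /\
    forall y y', P' y -> P' y' -> y <> y' -> forall a, In a (F y) -> ~ In a (F y').
Proof.
  intros HP Hfib.
  destruct (omega1_rec W lt Hw1 P (fun x y => x <> y /\ forall a, In a (F x) -> ~ In a (F y)))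
    as [g [Hg1 Hg2]].
  - intros C HC.
    assert (Hbad : countable (fun y => exists x, C x /\
                     ((fun x y => y = x \/ exists a, In a (F x) /\ (P y /\ In a (F y))) x y))).
    { apply countable_union; auto. intros x _. apply countable_or; [apply countable_single|].
      apply (countable_union (fun a => In a (F x)) (fun a y => P y /\ In a (F y))).
      - apply countable_In.
      - intros; apply Hfib. }
    apply NNPP. intro Hn. apply HP. eapply countable_mono; [|exact Hbad].
    intros y Hy. simpl. apply NNPP. intro Hb. apply Hn. exists y. split; auto.
    intros x Hx. split.
    + intro E. apply Hb. exists x. split; auto.
    + intros a Ha Ha'. apply Hb. exists x. split; auto. right. exists a. auto.
  - destruct Hw1 as (_ & _ & Htri & _).
    assert (Hinj : forall a b, g a = g b -> a = b).
    { intros a b E. destruct (Htri a b) as [h|[h|h]]; auto.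
      - exfalso; apply (Hg2 _ _ h); auto.
      - exfalso; apply (Hg2 _ _ h); auto. }
    exists (fun y => exists xi, y = g xi). split; [|split].
    + intros y [xi ->]. auto.
    + apply (image_uncountable W lt Hw1); auto.
    + intros y y' [xi ->] [eta ->] Hne a Ha Ha'.
      destruct (Htri xi eta) as [h|[h|h]].
      * apply (proj2 (Hg2 _ _ h) a); auto.
      * subst; auto.
      * apply (proj2 (Hg2 _ _ h) a); auto.
Qed.

Lemma delta {T} (n : nat) : forall (F : T -> list W) (P : T -> Prop), uncountable P ->
  (forall y, P y -> (length (F y) <= n)%nat) ->
  exists P' r, (forall y, P' y -> P y) /\ uncountable P' /\
    forall y y', P' y -> P' y' -> y <> y' -> forall a, In a (F y) -> In a (F y') -> In a r.
Proof.
  induction n as [|n IH]; intros F P HP Hlen.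
  - exists P, nil. split; [auto|split; auto].
    intros y y' Hy _ _ a Ha. specialize (Hlen y Hy). destruct (F y); [destruct Ha|simpl in Hlen; lia].
  - destruct (classic (exists a, uncountable (fun y => P y /\ In a (F y)))) as [[a Ha]|Hn].
    + destruct (IH (fun y => remove Wdec a (F y)) (fun y => P y /\ In a (F y)) Ha) as
        [P' [r [H1 [H2 H3]]]].
      { intros y [Hy Hay]. pose proof (remove_length_lt Wdec (F y) a Hay).
        specialize (Hlen y Hy). lia. }
      exists P', (a :: r). split; [intros y Hy; apply H1; auto|split; [auto|]].
      intros y y' Hy Hy' Hne b Hb Hb'. destruct (Wdec a b) as [->|Hab]; [left; auto|].
      right. apply (H3 y y'); auto; apply in_in_remove; auto; intro E; apply Hab; symmetry; exact E.
    + destruct (delta_B F P HP) as [P' [H1 [H2 H3]]].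
      { intro a. apply NNPP. intro Hc. apply Hn. exists a. exact Hc. }
      exists P', nil. split; [auto|split; [auto|]].
      intros y y' Hy Hy' Hne a Ha Ha'. exfalso; exact (H3 y y' Hy Hy' Hne a Ha Ha').
Qed.

End Delta.
Section Norm.
Variable W : Type.

Lemma sumsq_cons (x : W -> R) a l : sumsq x (a :: l) = x a ^ 2 + sumsq x l.
Proof. reflexivity. Qed.
Lemma sumsq_nil (x : W -> R) : sumsq x nil = 0.
Proof. reflexivity. Qed.

Lemma sumsq_nonneg (x : W -> R) l : 0 <= sumsq x l.
Proof. induction l; rewrite ?sumsq_nil, ?sumsq_cons; [lra|]. pose proof (pow2_ge_0 (x a)); lra. Qed.

Lemma sumsq_app (x : W -> R) l1 l2 : sumsq x (l1 ++ l2) = sumsq x l1 + sumsq x l2.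
Proof. induction l1; simpl app; rewrite ?sumsq_nil, ?sumsq_cons; lra. Qed.

Lemma sumsq_ext_sq (x y : W -> R) l : (forall a, In a l -> x a ^ 2 = y a ^ 2) ->
  sumsq x l = sumsq y l.
Proof.
  induction l; intros H; rewrite ?sumsq_nil, ?sumsq_cons; auto.
  rewrite H by (left; auto). rewrite IHl; auto. intros; apply H; right; auto.
Qed.

Lemma sumsq_ext (x y : W -> R) l : (forall a, In a l -> x a = y a) ->
  sumsq x l = sumsq y l.
Proof. intros H; apply sumsq_ext_sq. intros a Ha; rewrite H; auto. Qed.

Lemma sumsq_filter (x : W -> R) (p : W -> bool) l :
  (forall a, In a l -> x a <> 0 -> p a = true) -> sumsq x (filter p l) = sumsq x l.
Proof.
  induction l; intros H; simpl filter; auto.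
  destruct (p a) eqn:E.
  - rewrite !sumsq_cons, IHl; auto. intros; apply H; simpl; auto.
  - rewrite sumsq_cons, IHl by (intros; apply H; simpl; auto).
    destruct (Req_dec (x a) 0) as [E0|E0].
    + rewrite E0; simpl; lra.
    + rewrite H in E; simpl; auto; discriminate.
Qed.

Lemma sumsq_len (x : W -> R) l M : (forall a, In a l -> x a ^ 2 <= M) ->
  sumsq x l <= INR (length l) * M.
Proof.
  induction l; intros H; rewrite ?sumsq_nil, ?sumsq_cons; simpl length; [simpl; lra|].
  rewrite S_INR. assert (x a ^ 2 <= M) by (apply H; left; auto).
  assert (sumsq x l <= INR (length l) * M) by (apply IHl; intros; apply H; right; auto). lra.
Qed.

Lemma sumsq_bound (x : W -> R) l L M : NoDup l -> (forall a, x a <> 0 -> In a L) ->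
  0 <= M -> (forall a, x a ^ 2 <= M) -> sumsq x l <= INR (length L) * M.
Proof.
  intros Hnd Hs HM Hb.
  set (p := fun a => if excluded_middle_informative (In a L) then true else false).
  rewrite <- (sumsq_filter x p l).
  - apply Rle_trans with (INR (length (filter p l)) * M).
    + apply sumsq_len; auto.
    + apply Rmult_le_compat_r; auto. apply le_INR. apply NoDup_incl_length.
      * apply NoDup_filter; auto.
      * intros a Ha. apply filter_In in Ha. destruct Ha as [_ Ha]. unfold p in Ha.
        destruct (excluded_middle_informative (In a L)); auto; discriminate.
  - intros a _ Ha. unfold p. destruct (excluded_middle_informative (In a L)) as [h|h]; [reflexivity|exfalso; apply h; auto].
Qed.

Lemma sumsq_term (x : W -> R) l a : In a l -> x a ^ 2 <= sumsq x l.
Proof.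
  induction l; intros H; [destruct H|]. rewrite sumsq_cons. destruct H as [->|H].
  - pose proof (sumsq_nonneg x l); lra.
  - pose proof (pow2_ge_0 (x a0)); specialize (IHl H); lra.
Qed.

Definition dot (x y : W -> R) l := fold_right Rplus 0 (map (fun a => x a * y a) l).

Lemma cs_step A B C p q : 0 <= A -> 0 <= B -> C * C <= A * B ->
  (C + p * q) * (C + p * q) <= (A + p * p) * (B + q * q).
Proof.
  intros HA HB HC.
  assert (H1 : 0 <= A * (q * q) + B * (p * p)).
  { pose proof (Rle_0_sqr q); pose proof (Rle_0_sqr p); unfold Rsqr in *.
    pose proof (Rmult_le_pos _ _ HA H). pose proof (Rmult_le_pos _ _ HB H0). lra. }
  assert (Hpq : 0 <= p * p * (q * q)).
  { pose proof (Rle_0_sqr q); pose proof (Rle_0_sqr p); unfold Rsqr in *. apply Rmult_le_pos; auto. }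
  assert (H2 : (2 * C * p * q) * (2 * C * p * q) <= (A * (q * q) + B * (p * p)) * (A * (q * q) + B * (p * p))).
  { pose proof (Rle_0_sqr (A * (q * q) - B * (p * p))) as H3. unfold Rsqr in H3.
    assert (C * C * (p * p * (q * q)) <= A * B * (p * p * (q * q))).
    { apply Rmult_le_compat_r; auto. }
    replace ((2 * C * p * q) * (2 * C * p * q)) with (4 * (C * C * (p * p * (q * q)))) by ring.
    replace ((A * (q * q) + B * (p * p)) * (A * (q * q) + B * (p * p))) with
      ((A * (q * q) - B * (p * p)) * (A * (q * q) - B * (p * p)) + 4 * (A * B * (p * p * (q * q)))) by ring.
    lra. }
  assert (H4 : 2 * C * p * q <= A * (q * q) + B * (p * p)).
  { apply Rsqr_incr_0_var; auto. }
  replace ((C + p * q) * (C + p * q)) with (C * C + 2 * C * p * q + p * p * (q * q)) by ring.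
  replace ((A + p * p) * (B + q * q)) with (A * B + (A * (q * q) + B * (p * p)) + p * p * (q * q)) by ring.
  lra.
Qed.

Lemma dot_cons (x y : W -> R) a l : dot x y (a :: l) = x a * y a + dot x y l.
Proof. reflexivity. Qed.

Lemma cs (x y : W -> R) l : dot x y l * dot x y l <= sumsq x l * sumsq y l.
Proof.
  induction l; [unfold dot, sumsq; simpl; lra|].
  pose proof (sumsq_nonneg x l). pose proof (sumsq_nonneg y l).
  rewrite dot_cons, !sumsq_cons.
  replace (x a ^ 2 + sumsq x l) with (sumsq x l + x a * x a) by ring.
  replace (y a ^ 2 + sumsq y l) with (sumsq y l + y a * y a) by ring.
  replace (x a * y a + dot x y l) with (dot x y l + x a * y a) by ring.
  apply cs_step; auto.
Qed.

Lemma sumsq_plus (x y : W -> R) l :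
  sumsq (fun a => x a + y a) l = sumsq x l + 2 * dot x y l + sumsq y l.
Proof.
  induction l; [unfold sumsq, dot; simpl; ring|].
  rewrite !sumsq_cons, IHl, dot_cons. ring.
Qed.

Lemma mink (x y : W -> R) l :
  sqrt (sumsq (fun a => x a + y a) l) <= sqrt (sumsq x l) + sqrt (sumsq y l).
Proof.
  pose proof (sumsq_nonneg x l) as Hx. pose proof (sumsq_nonneg y l) as Hy.
  pose proof (cs x y l) as Hc.
  assert (Hd : dot x y l <= sqrt (sumsq x l) * sqrt (sumsq y l)).
  { rewrite <- sqrt_mult by auto.
    destruct (Rle_or_lt (dot x y l) 0) as [h|h]; [pose proof (sqrt_pos (sumsq x l * sumsq y l)); lra|].
    rewrite <- (sqrt_square (dot x y l)) by lra. apply sqrt_le_1_alt. lra. }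
  apply Rsqr_incr_0_var; [| pose proof (sqrt_pos (sumsq x l)); pose proof (sqrt_pos (sumsq y l)); lra].
  unfold Rsqr. rewrite sqrt_sqrt by (apply sumsq_nonneg).
  rewrite sumsq_plus.
  replace ((sqrt (sumsq x l) + sqrt (sumsq y l)) * (sqrt (sumsq x l) + sqrt (sumsq y l))) with
   (sqrt (sumsq x l) * sqrt (sumsq x l) + 2 * (sqrt (sumsq x l) * sqrt (sumsq y l)) + sqrt (sumsq y l) * sqrt (sumsq y l)) by ring.
  rewrite !sqrt_sqrt by auto. lra.
Qed.

Lemma mink_gen (z x y : W -> R) l : (forall a, z a = x a + y a) ->
  sqrt (sumsq z l) <= sqrt (sumsq x l) + sqrt (sumsq y l).
Proof.
  intros H. rewrite (sumsq_ext z (fun a => x a + y a)); [apply mink|]. intros; apply H.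
Qed.

Variable A : list W -> Prop.

Lemma normA_ub (x : W -> R) M : (forall l, A l -> sqrt (sumsq x l) <= M) ->
  Rbar_le (normA A x) (Finite M).
Proof.
  intros H. unfold normA. apply (proj2 (Lub_Rbar_correct _)).
  intros r [l [Hl ->]]. simpl. auto.
Qed.

Lemma normA_lb (x : W -> R) l : A l -> Rbar_le (Finite (sqrt (sumsq x l))) (normA A x).
Proof.
  intros H. unfold normA. apply (proj1 (Lub_Rbar_correct _)). exists l; auto.
Qed.

Lemma normA_fin_le (x : W -> R) m l : normA A x = Finite m -> A l -> sqrt (sumsq x l) <= m.
Proof. intros E Hl. pose proof (normA_lb x l Hl) as H. rewrite E in H. exact H. Qed.

Lemma normA_lt (x : W -> R) e l : Rbar_lt (normA A x) (Finite e) -> A l -> sqrt (sumsq x l) < e.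
Proof.
  intros E Hl. pose proof (normA_lb x l Hl) as H.
  destruct (normA A x); simpl in *; try contradiction; lra.
Qed.

Lemma normA_approx (x : W -> R) B : A nil -> (forall l, A l -> sqrt (sumsq x l) <= B) ->
  exists m, 0 <= m /\ (forall l, A l -> sqrt (sumsq x l) <= m) /\
    forall t, 0 < t -> exists l, A l /\ m - t < sqrt (sumsq x l).
Proof.
  intros Hnil HB.
  pose proof (normA_ub x B HB) as Hu. pose proof (normA_lb x nil Hnil) as Hl.
  rewrite sumsq_nil, sqrt_0 in Hl.
  destruct (normA A x) as [m| |] eqn:E; simpl in Hu, Hl; try contradiction.
  exists m. split; auto. split.
  - intros l Hl'. eapply normA_fin_le; eauto.
  - intros t Ht. apply NNPP. intro Hn.
    assert (Rbar_le (normA A x) (Finite (m - t))).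
    { apply normA_ub. intros l Hl'. apply Rnot_lt_le. intro h. apply Hn. exists l; auto. }
    rewrite E in H. simpl in H. lra.
Qed.

End Norm.
Section Reduce.
Variable W : Type.
Variable lt : W -> W -> Prop.
Hypothesis Hw1 : is_omega1 W lt.
Variable A : list W -> Prop.
Hypothesis HAnd : forall l, A l -> NoDup l.

Lemma codes_pigeon {T} (code : T -> W -> Z) (r0 : list W) : forall P, uncountable P ->
  exists P', (forall y, P' y -> P y) /\ uncountable P' /\
    forall y y', P' y -> P' y' -> forall a, In a r0 -> code y a = code y' a.
Proof.
  induction r0 as [|b r0 IH]; intros P HP.
  - exists P. split; auto. split; auto. intros ? ? ? ? ? [].
  - destruct (IH P HP) as [P1 [H1 [H2 H3]]].
    destruct (pigeon countable_Z P1 (fun y => code y b) H2) as [k Hk].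
    exists (fun y => P1 y /\ code y b = k). split; [intros y [Hy _]; auto|split; auto].
    intros y y' [Hy Hb] [Hy' Hb'] a [<-|Ha]; [congruence|auto].
Qed.

Lemma Int_part_err (t D : R) : 0 < D -> (t - IZR (Int_part (t / D)) * D) ^ 2 <= D ^ 2.
Proof.
  intros HD. destruct (base_Int_part (t / D)) as [H1 H2].
  set (k := IZR (Int_part (t / D))) in *.
  assert (E : t - k * D = (t / D - k) * D) by (field; lra).
  assert (0 <= t - k * D <= D).
  { rewrite E. split.
    - apply Rmult_le_pos; lra.
    - assert ((t / D - k) * D <= 1 * D) by (apply Rmult_le_compat_r; lra). lra. }
  apply pow_incr. lra.
Qed.

Lemma reduce (Y : (W -> R) -> Prop) (e : R) : 0 < e -> uncountable Y ->
  (forall y, Y y -> XA A y) ->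
  exists (P : (W -> R) -> Prop) (w u : (W -> R) -> W -> R) (T : (W -> R) -> list W),
  (forall y, P y -> Y y) /\ uncountable P /\
  (forall y l, P y -> A l -> sqrt (sumsq (vsub y (w y)) l) <= 2 * e) /\
  (forall y a, P y -> u y a <> 0 -> In a (T y)) /\
  (forall y a, u y a = 0 \/ u y a = w y a) /\
  (forall y y' a, P y -> P y' -> w y a - w y' a = u y a - u y' a) /\
  (forall y y', P y -> P y' -> y <> y' -> forall a, In a (T y) -> ~ In a (T y')) /\
  ((forall y, P y -> T y <> nil) \/ (forall y, P y -> T y = nil)).
Proof.
  intros He HY HX.
  assert (Hch : forall y, exists p : (W -> R) * list W, Y y ->
     (forall a, fst p a <> 0 -> In a (snd p)) /\
     forall l, A l -> sqrt (sumsq (vsub y (fst p)) l) < e).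
  { intro y. destruct (classic (Y y)) as [Hy|Hy].
    - destruct (HX y Hy) as [_ Hx]. destruct (Hx e He) as [z [[L HL] Hz]].
      exists (z, L). intros _. split; auto. intros l Hl. eapply normA_lt; eauto.
    - exists ((fun _ => 0), nil). intro; contradiction. }
  set (zz := fun y => fst (proj1_sig (constructive_indefinite_description _ (Hch y)))).
  set (LL := fun y => snd (proj1_sig (constructive_indefinite_description _ (Hch y)))).
  assert (Hz : forall y, Y y -> (forall a, zz y a <> 0 -> In a (LL y)) /\
     forall l, A l -> sqrt (sumsq (vsub y (zz y)) l) < e).
  { intros y Hy. unfold zz, LL. destruct (constructive_indefinite_description _ (Hch y)) as [p Hp].
    simpl. auto. }
  clearbody zz LL.
  destruct (pigeon countable_nat Y (fun y => length (LL y)) HY) as [n Hn].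
  destruct (delta W lt Hw1 n LL _ Hn) as [P2 [r [H2a [H2b H2c]]]].
  { intros y [_ E]. lia. }
  set (inr := fun a => if excluded_middle_informative (In a r) then true else false).
  set (D := e / (INR (length r) + 1)).
  assert (HD : 0 < D).
  { unfold D. apply Rdiv_lt_0_compat; auto. pose proof (pos_INR (length r)). lra. }
  set (code := fun y a => Int_part (zz y a / D)).
  set (w := fun y a => if inr a then IZR (code y a) * D else zz y a).
  set (u := fun y a => if inr a then 0 else zz y a).
  set (T := fun y => filter (fun a => negb (inr a)) (LL y)).
  destruct (codes_pigeon code r P2 H2b) as [P3 [H3a [H3b H3c]]].
  destruct (pigeon countable_nat P3 (fun y => length (T y)) H3b) as [k Hk].
  exists (fun y => P3 y /\ length (T y) = k), w, u, T.
  assert (HY3 : forall y, P3 y -> Y y /\ length (LL y) = n) by (intros; apply H2a, H3a; auto).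
  split; [intros y [Hy _]; apply HY3; auto|].
  split; [exact Hk|].
  split.
  { intros y l [Hy _] Hl. destruct (HY3 y Hy) as [HYy _].
    destruct (Hz y HYy) as [_ Hzl].
    apply Rle_trans with (sqrt (sumsq (vsub y (zz y)) l) + sqrt (sumsq (vsub (zz y) (w y)) l)).
    { apply mink_gen. intro a. unfold vsub. ring. }
    assert (sqrt (sumsq (vsub (zz y) (w y)) l) <= e); [|specialize (Hzl l Hl); lra].
    assert (Hb : sumsq (vsub (zz y) (w y)) l <= INR (length r) * D ^ 2).
    { apply sumsq_bound; [apply HAnd; auto| |apply pow2_ge_0|].
      - intros a Ha. unfold vsub, w in Ha. unfold inr in Ha.
        destruct (excluded_middle_informative (In a r)); auto. exfalso; apply Ha; ring.
      - intros a. unfold vsub, w, inr.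
        destruct (excluded_middle_informative (In a r)).
        + unfold code. apply Int_part_err; auto.
        + replace (zz y a - zz y a) with 0 by ring. rewrite pow_i by lia. apply pow2_ge_0. }
    assert (INR (length r) * D ^ 2 <= e ^ 2).
    { unfold D. pose proof (pos_INR (length r)).
      replace (INR (length r) * (e / (INR (length r) + 1)) ^ 2) with
        (e ^ 2 * (INR (length r) / ((INR (length r) + 1) * (INR (length r) + 1)))) by (field; lra).
      rewrite <- (Rmult_1_r (e ^ 2)) at 2. apply Rmult_le_compat_l; [apply pow2_ge_0|].
      apply Rmult_le_reg_r with ((INR (length r) + 1) * (INR (length r) + 1)); [nra|].
      field_simplify; [nra|lra]. }
    rewrite <- (sqrt_pow2 e) by lra. apply sqrt_le_1_alt. lra. }
  split.
  { intros y a [Hy _] Ha. destruct (HY3 y Hy) as [HYy _]. destruct (Hz y HYy) as [Hs _].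
    unfold u in Ha. unfold T. apply filter_In.
    destruct (inr a); [exfalso; apply Ha; reflexivity|]. split; auto. }
  split.
  { intros y a. unfold u, w. destruct (inr a); auto. }
  split.
  { intros y y' a [Hy _] [Hy' _]. unfold w, u, inr.
    destruct (excluded_middle_informative (In a r)) as [h|h]; [|ring].
    rewrite (H3c y y' Hy Hy' a h). ring. }
  split.
  { intros y y' [Hy _] [Hy' _] Hne a Ha Ha'. unfold T in Ha, Ha'.
    apply filter_In in Ha. apply filter_In in Ha'.
    destruct Ha as [Ha Hr]. destruct Ha' as [Ha' _].
    assert (In a r) by (apply (H2c y y'); auto).
    unfold inr in Hr. destruct (excluded_middle_informative (In a r)); [discriminate|contradiction]. }
  destruct k as [|k].
  - right. intros y [_ E]. destruct (T y); [auto|discriminate].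
  - left. intros y [_ E] E'. rewrite E' in E. discriminate.
Qed.

End Reduce.
Section Cross.
Variables (W I J : Type) (zero one : I) (H01 : zero <> one) (c : W -> W -> I * J).
Hypothesis Hsym : symmetric_coloring c.

Lemma one_cross (T1 T2 : list W) (u1 u2 : W -> R) l :
  T0_family zero c l -> (forall a b, In a T1 -> In b T2 -> fst (c a b) = one) ->
  (forall a, In a T1 -> ~ In a T2) -> (forall a, u1 a <> 0 -> In a T1) ->
  (forall a, u2 a <> 0 -> In a T2) ->
  sumsq (fun a => u1 a - u2 a) l = sumsq u1 l \/ sumsq (fun a => u1 a - u2 a) l = sumsq u2 l.
Proof.
  intros [Hnd Hh] Hone Hdis H1 H2.
  destruct (classic (exists b, In b l /\ In b T2)) as [[b [Hb HbT]]|Hn].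
  - right. apply sumsq_ext_sq. intros a Ha.
    assert (u1 a = 0).
    { apply NNPP. intro Hu. pose proof (H1 a Hu) as HaT.
      assert (a <> b) by (intro E; subst; eapply Hdis; eauto).
      pose proof (Hh a b Ha Hb H). rewrite (Hone a b HaT HbT) in H0. auto. }
    rewrite H. ring.
  - left. apply sumsq_ext. intros a Ha.
    assert (u2 a = 0).
    { apply NNPP. intro Hu. apply Hn. exists a. auto. }
    rewrite H. ring.
Qed.

Definition inb (L : list W) (a : W) : bool :=
  if excluded_middle_informative (In a L) then true else false.

Lemma inb_true L a : inb L a = true <-> In a L.
Proof. unfold inb. destruct (excluded_middle_informative (In a L)); split; auto; try discriminate; tauto. Qed.

Lemma T0_filter p l : T0_family zero c l -> T0_family zero c (filter p l).
Proof.
  intros [Hnd Hh]. split; [apply NoDup_filter; auto|].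
  intros a b Ha Hb. apply filter_In in Ha. apply filter_In in Hb. apply Hh; tauto.
Qed.

Lemma zero_cross (T3 T4 : list W) (u3 u4 : W -> R) l3 l4 :
  T0_family zero c l3 -> T0_family zero c l4 ->
  (forall a b, In a T3 -> In b T4 -> fst (c a b) = zero) ->
  (forall a, In a T3 -> ~ In a T4) -> (forall a, u3 a <> 0 -> In a T3) ->
  (forall a, u4 a <> 0 -> In a T4) ->
  exists l, T0_family zero c l /\
    sumsq (fun a => u3 a - u4 a) l = sumsq u3 l3 + sumsq u4 l4.
Proof.
  intros H3 H4 Hz Hdis S3 S4.
  set (l3' := filter (inb T3) l3). set (l4' := filter (inb T4) l4).
  assert (E3 : sumsq u3 l3' = sumsq u3 l3).
  { apply sumsq_filter. intros a _ Ha. apply inb_true. auto. }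
  assert (E4 : sumsq u4 l4' = sumsq u4 l4).
  { apply sumsq_filter. intros a _ Ha. apply inb_true. auto. }
  assert (I3 : forall a, In a l3' -> In a T3).
  { intros a Ha. apply filter_In in Ha. apply inb_true. tauto. }
  assert (I4 : forall a, In a l4' -> In a T4).
  { intros a Ha. apply filter_In in Ha. apply inb_true. tauto. }
  destruct (T0_filter (inb T3) l3 H3) as [N3 K3].
  destruct (T0_filter (inb T4) l4 H4) as [N4 K4].
  exists (l3' ++ l4'). split.
  - split.
    + apply NoDup_app; auto. intros a Ha Ha'. eapply Hdis; eauto.
    + intros a b Ha Hb Hab. apply in_app_or in Ha. apply in_app_or in Hb.
      destruct Ha as [Ha|Ha]; destruct Hb as [Hb|Hb].
      * apply K3; auto.
      * apply Hz; auto.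
      * rewrite Hsym. apply Hz; auto.
      * apply K4; auto.
  - rewrite sumsq_app. rewrite <- E3, <- E4. f_equal.
    + apply sumsq_ext. intros a Ha.
      assert (u4 a = 0) by (apply NNPP; intro h; eapply Hdis; eauto). rewrite H. ring.
    + apply sumsq_ext_sq. intros a Ha.
      assert (u3 a = 0) by (apply NNPP; intro h; eapply Hdis; eauto). rewrite H. ring.
Qed.

Lemma sub_sumsq (u w : W -> R) l : (forall a, u a = 0 \/ u a = w a) ->
  T0_family zero c l -> exists l', T0_family zero c l' /\ sumsq u l = sumsq w l'.
Proof.
  intros Huw Hl.
  set (p := fun a => if Req_EM_T (u a) 0 then false else true).
  exists (filter p l). split; [apply T0_filter; auto|].
  rewrite <- (sumsq_filter _ u p l).
  - apply sumsq_ext. intros a Ha. apply filter_In in Ha. destruct Ha as [_ Ha].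
    unfold p in Ha. destruct (Req_EM_T (u a) 0) as [h|h]; [discriminate|].
    destruct (Huw a) as [h'|h']; [contradiction|exact h'].
  - intros a _ Ha. unfold p. destruct (Req_EM_T (u a) 0) as [h|h]; [contradiction|reflexivity].
Qed.

End Cross.

Lemma tri3 {W} (x p q s : W -> R) l : (forall a, x a = p a - q a + s a) ->
  sqrt (sumsq x l) <= sqrt (sumsq p l) + sqrt (sumsq q l) + sqrt (sumsq s l).
Proof.
  intros H.
  apply Rle_trans with (sqrt (sumsq p l) + sqrt (sumsq (fun a => - q a + s a) l)).
  { apply mink_gen. intro a. rewrite H. ring. }
  pose proof (mink _ (fun a => - q a) s l).
  rewrite (sumsq_ext_sq _ (fun a => - q a) q) in H0 by (intros; ring). lra.
Qed.

Lemma sq_lb x s : 0 <= x -> x <= sqrt s -> 0 <= s -> x * x <= s.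
Proof.
  intros H1 H2 H3. rewrite <- (sqrt_sqrt s H3). apply Rmult_le_compat; auto.
Qed.

Lemma sq_ub x s : sqrt s <= x -> 0 <= s -> s <= x * x.
Proof.
  intros H1 H3. rewrite <- (sqrt_sqrt s H3). pose proof (sqrt_pos s).
  apply Rmult_le_compat; auto.
Qed.

Lemma Int_part_close a b be : 0 < be -> Int_part (a / be) = Int_part (b / be) -> a - b < be.
Proof.
  intros Hb E. destruct (base_Int_part (a / be)) as [A1 A2]. destruct (base_Int_part (b / be)) as [B1 B2].
  rewrite E in A1, A2.
  assert (a / be - b / be < 1) by lra.
  assert ((a - b) / be < 1) by (unfold Rdiv in *; lra).
  apply Rmult_lt_compat_r with (r := be) in H0; auto.
  replace ((a - b) / be * be) with (a - b) in H0 by (field; lra). lra.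
Qed.
Theorem proposition4p3
  (W : Type) (lt : W -> W -> Prop) (Hw1 : is_omega1 W lt)
  (I J : Type) (zero one : I) (H01 : zero <> one) (HJ : inhabited J)
  (c : W -> W -> I * J) (Hsym : symmetric_coloring c)
  (Hc : strong_T_coloring lt zero one c)
  (eps : R) (Heps : 0 < eps) :
  (~ exists Y : (W -> R) -> Prop,
       uncountable Y /\ (forall y, Y y -> XA (T0_family zero c) y) /\
       equilateral (T0_family zero c) Y) /\
  (~ exists Y : (W -> R) -> Prop,
       uncountable Y /\
       (forall y, Y y -> XA (T0_family zero c) y /\
                         normA (T0_family zero c) y = Finite 1) /\
       separated (T0_family zero c) (1 + eps) Y).
Proof.
  set (A := T0_family zero c).
  assert (HAnd : forall l, A l -> NoDup l) by (intros l [H _]; exact H).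
  assert (HAnil : A nil) by (split; [constructor|intros a b []]).
  destruct Hc as [_ Hc2].
  assert (Hirr : forall a, ~ lt a a) by apply Hw1.
  split.
  - intros [Y [HY [HX [d [Hd Heq]]]]].
    set (e := d / 400).
    assert (He : 0 < e) by (unfold e; lra).
    destruct (reduce W lt Hw1 A HAnd Y e He HY HX) as
      (P & w & u & T & HPY & HPu & Herr & Hsupp & Huw & Hwu & Hdis & Hne).
    assert (Hd1 : forall y y' l, P y -> P y' -> A l ->
       sqrt (sumsq (vsub y y') l) <= 4 * e + sqrt (sumsq (fun a => u y a - u y' a) l)).
    { intros y y' l Hy Hy' Hl.
      rewrite (sumsq_ext _ (fun a => u y a - u y' a) (vsub (w y) (w y')))
        by (intros; unfold vsub; rewrite (Hwu y y' a Hy Hy'); auto).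
      eapply Rle_trans; [apply (tri3 _ (vsub y (w y)) (vsub y' (w y')) (vsub (w y) (w y')))|].
      { intro a. unfold vsub. ring. }
      pose proof (Herr y l Hy Hl). pose proof (Herr y' l Hy' Hl). lra. }
    assert (Hd2 : forall y y' l, P y -> P y' -> y <> y' -> A l ->
       sqrt (sumsq (fun a => u y a - u y' a) l) <= 4 * e + d).
    { intros y y' l Hy Hy' Hne' Hl.
      rewrite (sumsq_ext _ (fun a => u y a - u y' a) (vsub (w y) (w y')))
        by (intros; unfold vsub; rewrite (Hwu y y' a Hy Hy'); auto).
      eapply Rle_trans; [apply (tri3 _ (vsub y y') (vsub y (w y)) (vsub y' (w y')))|].
      { intro a. unfold vsub. ring. }
      pose proof (Herr y l Hy Hl). pose proof (Herr y' l Hy' Hl).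
      pose proof (normA_fin_le W A (vsub y y') d l (Heq y y' (HPY y Hy) (HPY y' Hy') Hne') Hl).
      lra. }
    assert (Hm : forall y, exists m, P y -> 0 <= m /\ (forall l, A l -> sqrt (sumsq (u y) l) <= m) /\
        forall t, 0 < t -> exists l, A l /\ m - t < sqrt (sumsq (u y) l)).
    { intro y. destruct (classic (P y)) as [Hy|Hy]; [|exists 0; intro; contradiction].
      destruct (normA_approx W A (u y) (sqrt (INR (length (T y)) * sumsq (u y) (T y))) HAnil)
        as [m Hm].
      - intros l Hl. apply sqrt_le_1_alt.
        apply sumsq_bound; [apply HAnd; auto|intros a Ha; apply Hsupp; auto|apply sumsq_nonneg|].
        intro a. destruct (Req_dec (u y a) 0) as [h|h].
        + rewrite h. rewrite pow_i by lia. apply sumsq_nonneg.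
        + apply sumsq_term. apply Hsupp; auto.
      - exists m. intros _. exact Hm. }
    set (mm := fun y => proj1_sig (constructive_indefinite_description _ (Hm y))).
    assert (Hmm : forall y, P y -> 0 <= mm y /\ (forall l, A l -> sqrt (sumsq (u y) l) <= mm y) /\
        forall t, 0 < t -> exists l, A l /\ mm y - t < sqrt (sumsq (u y) l)).
    { intros y Hy. unfold mm. destruct (constructive_indefinite_description _ (Hm y)) as [m Hm'].
      simpl. auto. }
    clearbody mm.
    set (be := d / 100).
    assert (Hbe : 0 < be) by (unfold be; lra).
    destruct (pigeon countable_Z P (fun y => Int_part (mm y / be)) HPu) as [k Hk].
    assert (Hclose : forall y y', P y /\ Int_part (mm y / be) = k ->
              P y' /\ Int_part (mm y' / be) = k -> mm y - mm y' < be).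
    { intros y y' [_ E] [_ E']. apply Int_part_close; [exact Hbe|congruence]. }
    destruct Hne as [Hne|Hnil].
    + destruct (omega1_inj W lt Hw1 _ Hk) as [g [Hg1 Hg2]].
      assert (Hgne : forall a b, lt a b -> g a <> g b).
      { intros a b h E. apply Hg2 in E. subst. eapply Hirr; eauto. }
      assert (HgP : forall xi, P (g xi)) by (intro xi; apply (Hg1 xi)).
      destruct (Hc2 (fun xi => T (g xi))) as [[x0 [y0 [h0 Hz0]]] [x1 [y1 [h1 Ho1]]]].
      * intro xi. apply Hne. apply HgP.
      * intros xi eta Hxe a Ha.
        exact (Hdis (g xi) (g eta) (HgP xi) (HgP eta) (fun E => Hxe (Hg2 _ _ E)) a Ha).
      * assert (Hone : d <= 4 * e + (mm (g x0) + be)).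
        { assert (Rbar_le (normA A (vsub (g x1) (g y1))) (Finite (4 * e + (mm (g x0) + be)))).
          { apply normA_ub. intros l Hl.
            eapply Rle_trans; [apply Hd1; auto|]. apply Rplus_le_compat_l.
            destruct (one_cross W I J zero one H01 c (T (g x1)) (T (g y1)) (u (g x1)) (u (g y1)) l Hl Ho1)
              as [E|E].
            - intros a Ha Ha'. apply (Hdis (g x1) (g y1)) with a; auto.
            - intros; apply Hsupp; auto.
            - intros; apply Hsupp; auto.
            - rewrite E. apply Rle_trans with (mm (g x1)); [apply Hmm; auto|].
              pose proof (Hclose (g x1) (g x0) (Hg1 x1) (Hg1 x0)). lra.
            - rewrite E. apply Rle_trans with (mm (g y1)); [apply Hmm; auto|].
              pose proof (Hclose (g y1) (g x0) (Hg1 y1) (Hg1 x0)). lra. }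
          rewrite Heq in H by (auto; apply Hgne; auto). exact H. }
        destruct (Hmm (g x0) (HgP x0)) as [Hm0 [_ Ha0]].
        destruct (Hmm (g y0) (HgP y0)) as [Hm1 [_ Ha1]].
        destruct (Ha0 be Hbe) as [l3 [Hl3 Hs3]].
        destruct (Ha1 be Hbe) as [l4 [Hl4 Hs4]].
        destruct (zero_cross W I J zero c Hsym (T (g x0)) (T (g y0)) (u (g x0)) (u (g y0)) l3 l4 Hl3 Hl4 Hz0)
          as [l [Hl E]].
        { intros a Ha Ha'. apply (Hdis (g x0) (g y0)) with a; auto. }
        { intros; apply Hsupp; auto. }
        { intros; apply Hsupp; auto. }
        pose proof (Hd2 (g x0) (g y0) l (HgP x0) (HgP y0) (Hgne _ _ h0) Hl) as H2.
        pose proof (Hclose (g x0) (g y0) (Hg1 x0) (Hg1 y0)) as Hc01.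
        assert (Hs : sumsq (fun a => u (g x0) a - u (g y0) a) l <= (4 * e + d) * (4 * e + d)).
        { apply sq_ub; auto. apply sumsq_nonneg. }
        assert (Ha : (mm (g x0) - be) * (mm (g x0) - be) <= sumsq (u (g x0)) l3).
        { apply sq_lb; [unfold e, be in *; lra|lra|apply sumsq_nonneg]. }
        assert (Hb : (mm (g y0) - be) * (mm (g y0) - be) <= sumsq (u (g y0)) l4).
        { apply sq_lb; [unfold e, be in *; lra|lra|apply sumsq_nonneg]. }
        rewrite E in Hs.
        set (p := mm (g x0) - be) in *. set (q := mm (g y0) - be) in *.
        assert (Hp : 97 / 100 * d <= p) by (unfold p, e, be in *; lra).
        assert (Hq : 96 / 100 * d <= q) by (unfold q, p, e, be in *; lra).
        assert (97 / 100 * d * (97 / 100 * d) <= p * p) by (apply Rmult_le_compat; lra).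
        assert (96 / 100 * d * (96 / 100 * d) <= q * q) by (apply Rmult_le_compat; lra).
        unfold e in Hs. nra.
    + destruct (two_elems _ Hk) as [y [y' [[Hy _] [[Hy' _] Hyy]]]].
      assert (Rbar_le (normA A (vsub y y')) (Finite (4 * e))).
      { apply normA_ub. intros l Hl. eapply Rle_trans; [apply Hd1; auto|].
        rewrite (sumsq_ext _ _ (fun _ => 0)).
        - assert (sumsq (fun _ : W => 0) l = 0).
          { clear. induction l; [reflexivity|]. rewrite sumsq_cons, IHl. ring. }
          rewrite H, sqrt_0. lra.
        - intros a _.
          assert (u y a = 0) by (apply NNPP; intro h; pose proof (Hsupp y a Hy h); rewrite Hnil in H; auto).
          assert (u y' a = 0) by (apply NNPP; intro h; pose proof (Hsupp y' a Hy' h); rewrite Hnil in H0; auto).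
          rewrite H, H0. ring. }
      rewrite Heq in H by (auto). simpl in H. unfold e in H. lra.
  - intros [Y [HY [HX Hsep]]].
    set (e := eps / 10).
    assert (He : 0 < e) by (unfold e; lra).
    destruct (reduce W lt Hw1 A HAnd Y e He HY (fun y Hy => proj1 (HX y Hy))) as
      (P & w & u & T & HPY & HPu & Herr & Hsupp & Huw & Hwu & Hdis & Hne).
    assert (Hd1 : forall y y' l, P y -> P y' -> A l ->
       sqrt (sumsq (vsub y y') l) <= 4 * e + sqrt (sumsq (fun a => u y a - u y' a) l)).
    { intros y y' l Hy Hy' Hl.
      rewrite (sumsq_ext _ (fun a => u y a - u y' a) (vsub (w y) (w y')))
        by (intros; unfold vsub; rewrite (Hwu y y' a Hy Hy'); auto).
      eapply Rle_trans; [apply (tri3 _ (vsub y (w y)) (vsub y' (w y')) (vsub (w y) (w y')))|].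
      { intro a. unfold vsub. ring. }
      pose proof (Herr y l Hy Hl). pose proof (Herr y' l Hy' Hl). lra. }
    assert (Hu1 : forall y l, P y -> A l -> sqrt (sumsq (u y) l) <= 1 + 2 * e).
    { intros y l Hy Hl. destruct (sub_sumsq W I J zero c (u y) (w y) l (Huw y) Hl) as [l' [Hl' E]].
      rewrite E.
      eapply Rle_trans; [apply (tri3 _ y (vsub y (w y)) (fun _ => 0))|].
      { intro a. unfold vsub. ring. }
      pose proof (Herr y l' Hy Hl').
      pose proof (normA_fin_le W A y 1 l' (proj2 (HX y (HPY y Hy))) Hl').
      assert (sumsq (fun _ : W => 0) l' = 0).
      { clear. induction l'; [reflexivity|]. rewrite sumsq_cons, IHl'. ring. }
      rewrite H1, sqrt_0. lra. }
    assert (Hfin : forall y y', P y -> P y' -> y <> y' ->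
       Rbar_le (normA A (vsub y y')) (Finite (4 * e + (1 + 2 * e))) -> False).
    { intros y y' Hy Hy' Hyy H.
      pose proof (Hsep y y' (HPY y Hy) (HPY y' Hy') Hyy) as H'.
      pose proof (Rbar_le_trans _ _ _ H' H). simpl in H0. unfold e in H0. lra. }
    destruct Hne as [Hne|Hnil].
    + destruct (omega1_inj W lt Hw1 _ HPu) as [g [HgP Hg2]].
      assert (Hgne : forall a b, lt a b -> g a <> g b).
      { intros a b h E. apply Hg2 in E. subst. eapply Hirr; eauto. }
      destruct (Hc2 (fun xi => T (g xi))) as [_ [x1 [y1 [h1 Ho1]]]].
      * intro xi. apply Hne. apply HgP.
      * intros xi eta Hxe a Ha.
        exact (Hdis (g xi) (g eta) (HgP xi) (HgP eta) (fun E => Hxe (Hg2 _ _ E)) a Ha).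
      * apply (Hfin (g x1) (g y1)); auto.
        apply normA_ub. intros l Hl.
        eapply Rle_trans; [apply Hd1; auto|]. apply Rplus_le_compat_l.
        destruct (one_cross W I J zero one H01 c (T (g x1)) (T (g y1)) (u (g x1)) (u (g y1)) l Hl Ho1)
          as [E|E].
        -- intros a Ha Ha'. apply (Hdis (g x1) (g y1)) with a; auto.
        -- intros; apply Hsupp; auto.
        -- intros; apply Hsupp; auto.
        -- rewrite E. apply Hu1; auto.
        -- rewrite E. apply Hu1; auto.
    + destruct (two_elems _ HPu) as [y [y' [Hy [Hy' Hyy]]]].
      apply (Hfin y y'); auto.
      apply normA_ub. intros l Hl. eapply Rle_trans; [apply Hd1; auto|].
      apply Rplus_le_compat_l.
      rewrite (sumsq_ext _ _ (fun _ => 0)).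
      * assert (sumsq (fun _ : W => 0) l = 0).
        { clear. induction l; [reflexivity|]. rewrite sumsq_cons, IHl. ring. }
        rewrite H, sqrt_0. lra.
      * intros a _.
        assert (u y a = 0) by (apply NNPP; intro h; pose proof (Hsupp y a Hy h); rewrite Hnil in H; auto).
        assert (u y' a = 0) by (apply NNPP; intro h; pose proof (Hsupp y' a Hy' h); rewrite Hnil in H0; auto).
        rewrite H, H0. ring.
Qed.
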